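(* Let $X$ be a path-connected Hausdorff space and let $m,l\in X$. Then the lion has a strategy in $X$ for the starting points $m$ (man) and $l$ (lion).
   Context: For a topological space $X$ and $x\in X$, let $P_x(X)$ be the set of continuous maps $\gamma:[0,+\infty)\to X$ with $\gamma(0)=x$. For $\gamma\in P_x(X)$ and $t\ge 0$, write $\gamma_{<t}=\gamma|_{[0,t)}$ and $\gamma_{\le t}=\gamma|_{[0,t]}$. Given starting points $m$ (man) and $l$ (lion) in $X$, a strategy for the lion is a function $S:P_m(X)\to P_l(X)$ such that (i) for each $\alpha\in P_m(X)$ there exists $t\ge 0$ with $S(\alpha)(t)=\alpha(t)$; and (ii) (no-lookahead rule) whenever $\alpha,\alpha'\in P_m(X)$ and $t\ge0$ satisfy $\alpha_{<t}=\alpha'_{<t}$, then $S(\alpha)_{\le t}=S(\alpha')_{\le t}$. *)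

(* Defs.v *)
From HB Require Import structures.
From mathcomp Require Import all_boot all_order all_algebra.
From mathcomp Require Import all_classical all_reals topology normedtype.
Set Implicit Arguments. Unset Strict Implicit. Unset Printing Implicit Defensive.
Import Order.TTheory GRing.Theory Num.Theory numFieldNormedType.Exports.
Local Open Scope classical_set_scope.
Local Open Scope ring_scope.

Definition path_connected_space (R : realType) (X : topologicalType) : Prop :=
  forall x y : X, exists g : R -> X,
    {within (`[0, 1]%classic : set R), continuous g} /\ g 0 = x /\ g 1 = y.

(* P_x(X): continuous maps [0,+oo) -> X starting at x, represented as maps
   R -> X continuous on the subspace [0,+oo) (values at negative times are
   irrelevant). *)
Definition Pstart (R : realType) (X : topologicalType) (x : X) : set (R -> X) :=
  [set g | {within (`[0, +oo[%classic : set R), continuous g} /\ g 0 = x].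

Definition lion_strategy (R : realType) (X : topologicalType) (m l : X)
    (S : (R -> X) -> (R -> X)) : Prop :=
  (forall a, @Pstart R X m a -> @Pstart R X l (S a)) /\
  (forall a, @Pstart R X m a -> exists t : R, 0 <= t /\ S a t = a t) /\
  (forall a a', @Pstart R X m a -> @Pstart R X m a' -> forall t : R, 0 <= t ->
     (forall s : R, 0 <= s -> s < t -> a s = a' s) ->
     forall s : R, 0 <= s -> s <= t -> S a s = S a' s).

(* Main.v *)
Require Import Defs.
From HB Require Import structures.
From mathcomp Require Import all_boot all_order all_algebra.
From mathcomp Require Import all_classical all_reals topology normedtype.
Set Implicit Arguments. Unset Strict Implicit. Unset Printing Implicit Defensive.
Import Order.TTheory GRing.Theory Num.Theory numFieldNormedType.Exports.
Local Open Scope classical_set_scope.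
Local Open Scope ring_scope.
From mathcomp Require Import lra.

Definition clamp {R : realType} (a b t : R) := Num.min (Num.max t a) b.

Lemma clamp_id {R : realType} (a b t : R) : a <= t -> t <= b -> clamp a b t = t.
Proof. by move=> h1 h2; rewrite /clamp max_l // min_l. Qed.

Lemma clamp_ge {R : realType} (a b t : R) : a <= b -> a <= clamp a b t.
Proof. by move=> ab; rewrite /clamp le_min le_max lexx orbT. Qed.

Lemma clamp_le {R : realType} (a b t : R) : clamp a b t <= b.
Proof. by rewrite /clamp ge_min lexx orbT. Qed.

Lemma clamp_le2 {R : realType} (a b t : R) : a <= t -> clamp a b t <= t.
Proof. by move=> h; rewrite /clamp max_l // ge_min lexx. Qed.

Lemma lin_cont {R : realType} : continuous (fun t : R => 2 * t - 2).
Proof.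
move=> x; apply: cvgB; last exact: cvg_cst.
apply: cvgM; [exact: cvg_cst | exact: cvg_id].
Qed.

Section S.
Context {R : realType} {X : topologicalType}.

Lemma comp_within (A : set R) (f : R -> X) (h : R -> R) :
  {within A, continuous f} -> continuous h -> (forall t, A (h t)) ->
  continuous (f \o h).
Proof.
move=> /subspace_continuousP cf ch Ah x.
apply: cvg_comp; last exact: (cf _ (Ah x)).
move=> P /= nP.
have /= := ch x _ nP.
rewrite /fmap /=.
move=> H.
have H' : nbhs x (h @^-1` (fun t => A t -> P t)) := H.
suff : nbhs x (h @^-1` P) by [].
by apply: filterS H' => y /= /(_ (Ah y)).
Qed.

Lemma clamp_cont (a b : R) : continuous (fun t : R => Num.min (Num.max t a) b).
Proof.
move=> x.
apply: (@continuous_min R R (fun t => Num.max t a) (fun _ => b)).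
  apply: (@continuous_max R R id (fun _ => a)); [exact: cvg_id| exact: cvg_cst].
exact: cvg_cst.
Qed.


Lemma glue (F1 F2 : R -> X) : continuous F1 -> continuous F2 -> F1 1 = F2 1 ->
  continuous (fun t : R => if t <= 1 then F1 t else F2 t).
Proof.
move=> c1 c2 e x.
set H := fun t : R => if t <= 1 then F1 t else F2 t.
have U : `]-oo, 1] `|` `[1, +oo[ = [set: R].
  apply/seteqP; split => // t _ /=; rewrite !in_itv /= !andbT.
  by case: (leP t 1) => h; [left | right; apply: ltW].
have cT : {within [set: R], continuous H}.
  rewrite -U; apply: withinU_continuous.
  - exact: lray_closed.
  - exact: rray_closed.
  - apply: (@subspace_eq_continuous _ _ _ (from_subspace _ F1)).
      by move=> t; rewrite inE /= in_itv /= /from_subspace /H => ->.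
    exact: continuous_subspaceT.
  - apply: (@subspace_eq_continuous _ _ _ (from_subspace _ F2)).
      move=> t; rewrite inE /= in_itv /= andbT => t1.
      rewrite /from_subspace /H; case: ifP => // t1'.
      by have -> : t = 1 by apply/eqP; rewrite eq_le t1 t1'.
    exact: continuous_subspaceT.
have := cT x; rewrite /continuous_at /from_subspace.
by rewrite (@nbhs_subspaceT _ x).
Qed.


Lemma left_det (a a' : R -> X) (t : R) : hausdorff_space X -> 0 < t ->
  {within `[0, +oo[, continuous a} -> {within `[0, +oo[, continuous a'} ->
  (forall s, 0 <= s -> s < t -> a s = a' s) -> a t = a' t.
Proof.
move=> hX t0 ca ca' E.
have sub : forall f : R -> X, {within `[0, +oo[, continuous f} -> f @ t^'- --> f t.
  move=> f /subspace_continuousP cf.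
  have := cf t; rewrite /= in_itv /= andbT => /(_ (ltW t0)) cft.
  apply: cvg_trans cft; apply: cvg_app => P /= nP.
  suff : nbhs t (fun y => y < t -> P y) by [].
  have nt := lt_nbhsr t0.
  have nP' : nbhs t (fun y => `[0, +oo[%classic y -> P y) := nP.
  apply: (filterS2 _ _ nP' nt) => y /= h1 y0 yt.
  by apply: h1 => //; rewrite /= in_itv /= andbT ltW.
have e : {near t^'-, a =1 a'}.
  suff : nbhs t (fun y => y < t -> a y = a' y) by [].
  have H := lt_nbhsr t0.
  by apply: filterS H => y y0 yt; apply: E => //; rewrite ltW.
apply: (@cvg_unique _ hX (a' @ t^'-)).
- apply: cvg_trans (sub a ca); exact: near_eq_cvg.
- exact: sub.
Qed.

End S.

Theorem mainTheorem1 (R : realType) (X : topologicalType) :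
  hausdorff_space X -> path_connected_space R X ->
  forall m l : X, exists S : (R -> X) -> (R -> X), lion_strategy m l S.
Proof.
move=> hX pc m l.
have [g [cg [g0 g1]]] := pc l m.
pose d := fun t : R => clamp 0 1 t.
pose c := fun t : R => clamp 0 2 (2 * t - 2).
exists (fun a t => if t <= 1 then g (d t) else a (c t)).
have dA : forall t, `[0, 1]%classic (d t).
  by move=> t; rewrite /= in_itv /= clamp_ge // clamp_le.
have cA : forall t, `[0, +oo[%classic (c t).
  by move=> t; rewrite /= in_itv /= andbT clamp_ge.
have cd : continuous d by exact: clamp_cont.
have cc : continuous c.
  move=> x; apply: (@continuous_comp _ _ _ (fun t : R => 2 * t - 2) (clamp 0 2)).
    exact: lin_cont.
  exact: clamp_cont.
split; [|split].
- move=> a [ca a0]; split.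
    apply: continuous_subspaceT; apply: glue.
    + exact: comp_within cg cd dA.
    + exact: comp_within ca cc cA.
    + have d1 : d 1 = 1 by rewrite /d clamp_id // ler01.
      have c1 : c 1 = 0 by rewrite /c clamp_id; lra.
      by rewrite /= d1 c1 g1 a0.
  by rewrite /d ler01 clamp_id // ?lexx ?ler01 //.
- move=> a [ca a0]; exists 2; split; first lra.
  have -> : (2 <= 1 :> R) = false by apply/negbTE; rewrite -ltNge; lra.
  have c2 : c 2 = 2 by rewrite /c clamp_id; lra.
  by rewrite c2.
- move=> a a' [ca a0] [ca' a0'] t t0 E s s0 st.
  case: ifP => // s1.
  have s1' : 1 < s by rewrite ltNge s1.
  have u0 : 0 <= c s by exact: clamp_ge.
  have u2 : c s <= 2 by exact: clamp_le.
  have us : c s <= 2 * s - 2 by apply: clamp_le2; lra.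
  have [ut|tu] := ltP (c s) t; first exact: E.
  have -> : c s = t by lra.
  apply: left_det => //; lra.
Qed.
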